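(* Let $n\ge3$ and $1\le l\le n$, and put $\alpha^{(n)}_l=2\cos\frac{l\pi}{n+1}$. If $l$ is odd, then \[ \Phi_n(\alpha^{(n)}_l)=16\cos^2\frac{l\pi}{2(n+1)}>0. \] If $l$ is even, then $\Phi_n(\alpha^{(n)}_l)=0$ and \[ \Phi_n'(\alpha^{(n)}_l)=K^{(n)}_l\Big(\cos\frac{l\pi}{n+1}+\frac{n}{n+2}\Big)\neq0,\qquad K^{(n)}_l=\frac{2(n+1)(n+2)\big(1-\cos\frac{l\pi}{n+1}\big)}{\sin^2\frac{l\pi}{n+1}}>0. \]
   Context: $U_n$ is the Chebyshev polynomial of the second kind, $U_n(\cos\theta)=\sin((n+1)\theta)/\sin\theta$, $\tilde U_n(x)=U_n(x/2)$, and $\Phi_n(x)=((n+1)x^2-6x-4n)\tilde U_n(x)+2(x+2)\tilde U_{n-1}(x)+2(x+2)$. *)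

(* Defs.v *)
From HB Require Import structures.
From mathcomp Require Import all_boot all_order all_algebra.
From mathcomp Require Import reals trigo.
Set Implicit Arguments. Unset Strict Implicit. Unset Printing Implicit Defensive.
Import Order.TTheory GRing.Theory Num.Theory.
Local Open Scope ring_scope.

(* Chebyshev polynomials of the second kind:
   U_0 = 1, U_1 = 2X, U_{n+2} = 2X U_{n+1} - U_n,
   so that U_n(cos t) = sin((n+1)t)/sin t. *)
Fixpoint chebU_pair {R : nzRingType} (n : nat) : {poly R} * {poly R} :=
  match n with
  | 0 => (1, 'X *+ 2)
  | m.+1 => let: (a, b) := chebU_pair m in (b, 'X *+ 2 * b - a)
  end.

Definition chebU {R : nzRingType} (n : nat) : {poly R} := (chebU_pair n).1.

Definition chebUt {R : fieldType} (n : nat) : {poly R} :=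
  chebU n \Po ((2%:R)^-1 *: 'X).

Definition Phi {R : fieldType} (n : nat) : {poly R} :=
  ((n.+1)%:R *: 'X^2 - 6%:R *: 'X - (4 * n)%:R%:P) * chebUt n
  + (2%:R *: ('X + 2%:R%:P)) * chebUt n.-1
  + 2%:R *: ('X + 2%:R%:P).

(* Main.v *)
Require Import Defs.
From HB Require Import structures.
From mathcomp Require Import all_boot all_order all_algebra.
From mathcomp Require Import reals trigo.
From mathcomp Require Import ring lra zify.
Import Order.TTheory GRing.Theory Num.Theory.
Local Open Scope ring_scope.

Lemma pairS {R : nzRingType} k : @chebU_pair R k.+1 = ((chebU_pair k).2, 'X *+ 2 * (chebU_pair k).2 - (chebU_pair k).1).
Proof. by rewrite /=; case: (chebU_pair k). Qed.

Section S.
Variable R : realType.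


Lemma sin_U (t : R) k :
  (chebU_pair k).1.[cos t] * sin t = sin ((k.+1)%:R * t) /\
  (chebU_pair k).2.[cos t] * sin t = sin ((k.+2)%:R * t).
Proof.
elim: k => [|k [IH1 IH2]].
  rewrite /= !hornerE; split; first by ring.
  have -> : (2%:R * t) = t + t by ring.
  rewrite sinD; ring.
rewrite pairS /=; split; first by [].
rewrite !hornerE.
move: IH1 IH2; set A := (chebU_pair k).1.[cos t]; set B := (chebU_pair k).2.[cos t] => IH1 IH2.
have -> : ((cos t + cos t) * B - A) * sin t = 2 * cos t * (B * sin t) - A * sin t by ring.
rewrite IH1 IH2.
have -> : (k.+3)%:R * t = (k.+2)%:R * t + t by rewrite !mulrS; ring.
have -> : (k.+1)%:R * t = (k.+2)%:R * t - t by rewrite !mulrS; ring.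
rewrite sinB sinD; ring.
Qed.

Lemma sincos_lpi (l : nat) : sin (l%:R * pi) = 0 :> R /\ cos (l%:R * (pi : R)) = (-1) ^+ l.
Proof.
elim: l => [|l [IH1 IH2]]; first by rewrite mul0r sin0 cos0.
rewrite mulrSr mulrDl mul1r (sinD (l%:R*pi) pi) (cosD (l%:R*pi) pi) IH1 IH2 sinpi cospi exprS; split; ring.
Qed.

Lemma der_U k (x : R) :
  (1 - x^+2) * (chebU_pair k).1^`().[x] = (k.+2)%:R * x * (chebU_pair k).1.[x] - (k.+1)%:R * (chebU_pair k).2.[x] /\
  (1 - x^+2) * (chebU_pair k).2^`().[x] = (k.+2)%:R * (chebU_pair k).1.[x] - (k.+1)%:R * x * (chebU_pair k).2.[x].
Proof.
elim: k => [|k [IH1 IH2]].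
  rewrite /= !derivE !hornerE; split; ring.
rewrite pairS /=.
move: IH1 IH2; set A := (chebU_pair k).1; set B := (chebU_pair k).2 => IH1 IH2.
rewrite !derivE !hornerE.
split.
  rewrite IH2 !mulrS; ring.
have E1 : (1 - x ^+ 2) * A^`().[x] - (k.+2%:R * x * A.[x] - k.+1%:R * B.[x]) = 0 by rewrite IH1 subrr.
have E2 : (1 - x ^+ 2) * B^`().[x] - (k.+2%:R * A.[x] - k.+1%:R * x * B.[x]) = 0 by rewrite IH2 subrr.
apply/eqP; rewrite -subr_eq0; apply/eqP.
transitivity (- ((1 - x ^+ 2) * A^`().[x] - (k.+2%:R * x * A.[x] - k.+1%:R * B.[x]))
   + 2 * x * ((1 - x ^+ 2) * B^`().[x] - (k.+2%:R * A.[x] - k.+1%:R * x * B.[x]))).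
  rewrite !mulrS; ring.
by rewrite E1 E2; ring.
Qed.
End S.
Fixpoint zpair (a b : int) (k : nat) : int * int :=
  match k with 0 => (1, a) | k.+1 => let: (u, v) := zpair a b k in (v, a * v - b ^+ 2 * u) end.

Lemma zpairS a b k : zpair a b k.+1 = ((zpair a b k).2, a * (zpair a b k).2 - b ^+ 2 * (zpair a b k).1).
Proof. by rewrite /=; case: (zpair a b k). Qed.

Lemma zpair_eval (R : realType) (c : R) (a b : int) k : 2 * c * b%:~R = a%:~R ->
  (zpair a b k).1%:~R = b%:~R ^+ k * (chebU_pair k).1.[c] /\
  (zpair a b k).2%:~R = b%:~R ^+ k.+1 * (chebU_pair k).2.[c].
Proof.
move=> H; elim: k => [|k [IH1 IH2]].
  by rewrite /= !hornerE -H; split; ring.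
rewrite zpairS pairS /=; split; first by [].
rewrite hornerD hornerN hornerM hornerMn hornerX intrB !intrM IH1 IH2 -H !exprS; ring.
Qed.

Lemma zpair_mod a b k : (b %| (zpair a b k).1 - a ^+ k)%Z /\ (b %| (zpair a b k).2 - a ^+ k.+1)%Z.
Proof.
elim: k => [|k [IH1 IH2]].
  by rewrite /= !subrr !dvdz0.
rewrite zpairS /=; split; first by [].
have -> : a * (zpair a b k).2 - b ^+ 2 * (zpair a b k).1 - a ^+ k.+2
   = a * ((zpair a b k).2 - a ^+ k.+1) - b * (b * (zpair a b k).1) by rewrite !exprS; ring.
apply: rpredB; [exact: dvdz_mull | exact: dvdz_mulr (dvdzz b)].
Qed.

Lemma no_rat_root (R : realType) (c : R) (a b : nat) k :
  coprime a b -> (1 < b)%N -> 2 * c * b%:R = - a%:R -> (chebU_pair k).1.[c] != 0.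
Proof.
move=> cop b1 H; apply/negP => /eqP H0.
have Hz : 2 * c * (b%:Z)%:~R = (- a%:Z)%:~R by rewrite intrN !pmulrn.
have [E _] := @zpair_eval R c (- a%:Z) b k Hz.
have Z : (zpair (- a%:Z) b k).1 = 0.
  by apply/eqP; rewrite -(intr_eq0 R) E H0 mulr0.
have [D _] := zpair_mod (- a%:Z) b k.
rewrite Z sub0r rpredN dvdzE abszX abszN !absz_nat in D.
have C : coprime (a ^ k) b by rewrite coprimeXl.
move: C; rewrite /coprime gcdnC; move/gcdn_idPl: D => -> /eqP b1'.
by rewrite b1' in b1.
Qed.
Lemma Ut_val (R : realType) k (x : R) : (chebUt k).[x] = (chebU_pair k).1.[x / 2].
Proof. by rewrite /chebUt horner_comp hornerZ hornerX mulrC. Qed.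

Lemma Ut_der (R : realType) k (x : R) : (chebUt k)^`().[x] = (chebU_pair k).1^`().[x / 2] / 2.
Proof. rewrite /chebUt deriv_comp derivZ derivX hornerM horner_comp !hornerE mulrC.
change ((chebU k)^`().[x / 2] * 2^-1 * 1 = (chebU k)^`().[x / 2] / 2). by rewrite mulr1. Qed.

Lemma Phi_eval (R : realType) m (x : R) :
  (Phi m.+1).[x] = ((m.+2)%:R * x^+2 - 6 * x - (4 * m.+1)%:R) * (chebU_pair m.+1).1.[x/2]
     + 2 * (x + 2) * (chebU_pair m).1.[x/2] + 2 * (x + 2).
Proof.
rewrite /Phi !(hornerD, hornerM, hornerZ, hornerN, hornerC, hornerX, hornerXn, Ut_val) /=.
ring.
Qed.

Lemma Phi_der (R : realType) m (x : R) :
  (Phi m.+1)^`().[x] = (2 * (m.+2)%:R * x - 6) * (chebU_pair m.+1).1.[x/2]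
     + ((m.+2)%:R * x^+2 - 6 * x - (4 * m.+1)%:R) * ((chebU_pair m.+1).1^`().[x/2] / 2)
     + 2 * (chebU_pair m).1.[x/2] + 2 * (x + 2) * ((chebU_pair m).1^`().[x/2] / 2) + 2.
Proof.
rewrite /Phi !(derivD, derivM, derivZ, derivB, derivC, derivX, derivXn, derivN).
rewrite !(hornerD, hornerM, hornerZ, hornerN, hornerC, hornerX, hornerXn, hornerMn, Ut_val, Ut_der) /=.
ring.
Qed.

Lemma h4l m : (2 * m.+3 - 2 * m.+1 = 4)%N. Proof. lia. Qed.
Lemma fin_l m : (2 < m.+1)%N -> (m.+3 <= 4)%N -> False. Proof. lia. Qed.

Theorem lemma4p11 (R : realType) (n l : nat) :
  (3 <= n)%N -> (1 <= l <= n)%N ->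
  let c : R := cos (l%:R * pi / (n.+1)%:R) in
  let alpha : R := 2 * c in
  (odd l ->
     (Phi n).[alpha] = 16 * cos (l%:R * pi / (2 * (n.+1)%:R)) ^+ 2
     /\ 0 < (Phi n).[alpha]) /\
  (~~ odd l ->
     let K : R := 2 * (n.+1)%:R * (n.+2)%:R * (1 - c)
                  / sin (l%:R * pi / (n.+1)%:R) ^+ 2 in
     (Phi n).[alpha] = 0
     /\ (Phi n)^`().[alpha] = K * (c + n%:R / (n.+2)%:R)
     /\ (Phi n)^`().[alpha] != 0
     /\ 0 < K).
Proof.
case: n => [//|m] n3 /andP[l1 ln].
set t := l%:R * pi / (m.+2)%:R => c alpha.
have cE : c = cos t by [].
have aE : alpha = 2 * c by [].
have pi0 : 0 < pi :> R := pi_gt0 R.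
have N2 : 0 < (m.+2)%:R :> R by rewrite ltr0n.
have t0 : 0 < t by rewrite /t divr_gt0 // mulr_gt0 // ltr0n.
have lm : l%:R < (m.+2)%:R :> R by rewrite ltr_nat ltnS.
have tpi : t < pi by rewrite /t ltr_pdivrMr //; nra.
have s0 : 0 < sin t by apply: sin_gt0_pi; rewrite t0 tpi.
have sc : c ^+ 2 + sin t ^+ 2 = 1 by rewrite cE cos2Dsin2.
have Nt : (m.+2)%:R * t = l%:R * pi by rewrite /t; field; apply: lt0r_neq0; have := ler0n R m; lra.
have [sN cN] := sincos_lpi R l.
have [U1 _] := sin_U R t m.+1.
rewrite Nt sN -cE in U1.
have Un0 : (chebU_pair m.+1).1.[c] = 0.
  by move/eqP: U1; rewrite mulf_eq0 (gt_eqF s0) orbF => /eqP.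
have [V1 _] := sin_U R t m.
have Mt : (m.+1)%:R * t = (m.+2)%:R * t - t by rewrite [in RHS]mulrS; ring.
rewrite Mt sinB Nt sN cN -cE mul0r sub0r in V1.
have A0 : (chebU_pair m).1.[c] = - (-1) ^+ l.
  apply: (mulIf (lt0r_neq0 s0)); rewrite V1; ring.
have [D1 D2] := der_U R m c.
have P2 : (chebU_pair m).2 = (chebU_pair m.+1).1 :> {poly R} by rewrite pairS.
rewrite P2 Un0 -sin2cos2 in D1 D2.
have a2 : alpha / 2 = c by rewrite aE; field.
have s2 : sin t ^+ 2 != 0 by rewrite expf_neq0 // gt_eqF.
have c1 : -1 < c by nra.
have c2 : c < 1 by nra.
split.
  move=> lo.
  have e1 : (-1) ^+ l = -1 :> R by rewrite -signr_odd lo expr1.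
  set y := l%:R * pi / (2 * (m.+2)%:R).
  have ty : t = y *+ 2 by rewrite /t /y mulr2n; field; apply: lt0r_neq0; have := ler0n R m; lra.
  have cy : c = cos y ^+ 2 *+ 2 - 1 by rewrite cE ty cos_mulr2n.
  have PE : (Phi m.+1).[alpha] = 8 * (1 + c).
    by rewrite Phi_eval a2 Un0 A0 e1 aE; ring.
  rewrite PE; split; last by lra.
  rewrite cy; ring.
move=> le K.
have e1 : (-1) ^+ l = 1 :> R by rewrite -signr_odd (negbTE le) expr0.
rewrite e1 in A0.
have dBE : (chebU_pair m.+1).1^`().[c] = - (m.+2)%:R / sin t ^+ 2.
  rewrite -[LHS](mulKf s2) D2 A0; ring.
have dAE : (chebU_pair m).1^`().[c] = - (m.+2)%:R * c / sin t ^+ 2.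
  rewrite -[LHS](mulKf s2) D1 A0; ring.
have K0 : 0 < K.
  rewrite /K divr_gt0 ?exprn_gt0 // mulr_gt0 ?subr_gt0 // mulr_gt0 ?ltr0n //.
  by rewrite mulr_gt0 ?ltr0n.
have DE : (Phi m.+1)^`().[alpha] = K * (c + (m.+1)%:R / (m.+3)%:R).
  rewrite Phi_der a2 Un0 A0 dBE dAE /K aE.
  field.
  rewrite (lt0r_neq0 s0) andbT; apply: lt0r_neq0; have := ler0n R m; lra.
split.
  by rewrite Phi_eval a2 Un0 A0 aE; ring.
split; first exact: DE.
split; last exact: K0.
rewrite DE mulf_neq0 ?(lt0r_neq0 K0) //.
apply/negP => /eqP ce.
have cm : c * (m.+3)%:R = - (m.+1)%:R.
  have m3 : (m.+3)%:R != 0 :> R by rewrite pnatr_eq0.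
  rewrite -[c](addrK ((m.+1)%:R / (m.+3)%:R)) ce; field.
  apply: lt0r_neq0; have := ler0n R m; lra.
set A2 := (2 * m.+1)%N; set B2 := m.+3.
set g := gcdn A2 B2.
have g0 : (0 < g)%N by rewrite gcdn_gt0.
have Ag : (A2 %/ g * g)%N = A2 by rewrite divnK // dvdn_gcdl.
have Bg : (B2 %/ g * g)%N = B2 by rewrite divnK // dvdn_gcdr.
have cop : coprime (A2 %/ g) (B2 %/ g).
  rewrite /coprime -(eqn_pmul2r g0) mul1n muln_gcdl Ag Bg.
  by [].
have b1 : (1 < B2 %/ g)%N.
  case Eb : (B2 %/ g)%N => [|[|k]] //.
    by move: Bg; rewrite Eb.
  move: Bg; rewrite Eb mul1n => gB.
  have d1 : (B2 %| A2)%N by rewrite -gB /g dvdn_gcdl.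
  have d2 : (B2 %| 2 * B2)%N by rewrite dvdn_mull.
  have d4 : (B2 %| 2 * B2 - A2)%N by rewrite dvdn_sub.
  have h4 : (2 * B2 - A2 = 4)%N by rewrite /A2 /B2 h4l.
  rewrite h4 in d4.
  have := dvdn_leq (isT : (0 < 4)%N) d4.
  by move/(fin_l _ n3).
have gR : (g%:R : R) != 0 by rewrite pnatr_eq0 -lt0n.
have H : 2 * c * (B2 %/ g)%N%:R = - (A2 %/ g)%N%:R.
  apply: (mulIf gR).
  have eB : ((B2 %/ g)%N%:R * g%:R : R) = (m.+3)%:R by rewrite -natrM Bg.
  have eA : ((A2 %/ g)%N%:R * g%:R : R) = (2 * m.+1)%:R by rewrite -natrM Ag.
  have -> : 2 * c * (B2 %/ g)%N%:R * g%:R = 2 * (c * ((B2 %/ g)%N%:R * g%:R)) by ring.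
  have -> : - (A2 %/ g)%N%:R * g%:R = - ((A2 %/ g)%N%:R * g%:R) :> R by ring.
  rewrite eB eA cm natrM; ring.
by move: (@no_rat_root R c _ _ m.+1 cop b1 H); rewrite Un0 eqxx.
Qed.
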